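(* For every Weyl element $w\in\mathbf{W}$ there is $z_w\in\mathcal{Z}$ such that $d_{w_0w}=w_0d_ww_0d_{w_0}z_w$.
   Context: $F$ is a non-archimedean local field with uniformizer $\varpi$. $G=GL_n(F)$ with center $\mathcal{Z}$ (scalar matrices). $\mathbf{W}$ is the Weyl group of permutation matrices and $w_0$ its longest element. Roots $\alpha_{i,j}(\mathrm{diag}(t))=t_i/t_j$, $\Phi^+=\{\alpha_{i,j}:i<j\}$, $\Phi^-=\{\alpha_{i,j}:i>j\}$, $\Delta=\{\alpha_{i,i+1}\}$, $(w\alpha)(t)=\alpha(w^{-1}tw)$, $\langle\alpha_{i,j},\bar{k}\rangle=k_i-k_j$. For $\bar{k}\in\mathbb{Z}^n$, $\varpi^{\bar{k}}=\mathrm{diag}(\varpi^{k_1},\dots,\varpi^{k_n})$. For $w\in\mathbf{W}$, $d_w$ is the element $\varpi^{\bar{k}}$ with $k_n=0$ and, for all $\alpha\in\Delta$, $\langle\alpha,\bar{k}\rangle=0$ if $w^{-1}\alpha\in\Phi^+$ and $\langle\alpha,\bar{k}\rangle=-1$ if $w^{-1}\alpha\in\Phi^-$. *)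

(* Defs.v *)
From HB Require Import structures.
From mathcomp Require Import all_boot all_order all_algebra all_fingroup.
Set Implicit Arguments. Unset Strict Implicit. Unset Printing Implicit Defensive.
Import Order.TTheory GRing.Theory Num.Theory.
Local Open Scope ring_scope.

Section Defs.
Variables (F : fieldType) (n : nat).

Definition varpi_pow (varpi : F) (k : 'I_n -> int) : 'M[F]_n :=
  diag_mx (\row_i (varpi ^ (k i))).

(* The longest Weyl element w_0, as a permutation: i |-> n-1-i.
   Its permutation matrix perm_mx w0perm is the antidiagonal matrix. *)
Definition w0perm : 'S_n := perm (@rev_ord_inj n).

(* Weyl elements are permutation matrices perm_mx s, (perm_mx s) i j = (s i == j).
   For t diagonal, (perm_mx s) t (perm_mx s)^{-1} = diag(t_{s 1}, ..., t_{s n}),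
   hence (w^{-1} alpha_{i,j})(t) = alpha_{i,j}(w t w^{-1}) = alpha_{s i, s j}(t).
   So w^{-1} alpha_{i,j} is positive iff s i < s j, negative iff s j < s i. *)
Definition inv_root_pos (s : 'S_n) (i j : 'I_n) : bool := (s i < s j)%N.
Definition inv_root_neg (s : 'S_n) (i j : 'I_n) : bool := (s j < s i)%N.

Definition pair_root (k : 'I_n -> int) (i j : 'I_n) : int := k i - k j.

(* k is the exponent vector of d_w for w = perm_mx s:
   k_n = 0, and for every simple root alpha_{i,i+1}:
   <alpha,k> = 0 if w^{-1} alpha > 0 and <alpha,k> = -1 if w^{-1} alpha < 0. *)
Definition is_d_exponent (s : 'S_n) (k : 'I_n -> int) : Prop :=
  (forall i : 'I_n, i.+1 = n -> k i = 0) /\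
  (forall i j : 'I_n, nat_of_ord j = i.+1 ->
     (inv_root_pos s i j -> pair_root k i j = 0) /\
     (inv_root_neg s i j -> pair_root k i j = -1)).

Definition is_d (varpi : F) (W D : 'M[F]_n) : Prop :=
  exists s : 'S_n, W = perm_mx s /\
  exists k : 'I_n -> int, D = varpi_pow varpi k /\ is_d_exponent s k.

End Defs.

(* Main.v *)
Require Import Defs.
From HB Require Import structures.
From mathcomp Require Import all_boot all_order all_algebra all_fingroup.
From mathcomp Require Import zify.
Import GRing.Theory.
Local Open Scope ring_scope.

Lemma perm_mx_entry (F : fieldType) n (s : 'S_n) i j :
  (perm_mx s : 'M[F]_n) i j = (s i == j)%:R.
Proof. by rewrite /perm_mx !mxE. Qed.

Lemma perm_mx_injF (F : fieldType) n (s t : 'S_n) :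
  (perm_mx s : 'M[F]_n) = perm_mx t -> s = t.
Proof.
move=> H; apply/permP => i.
have := congr1 (fun M : 'M[F]_n => M i (s i)) H.
rewrite /= !perm_mx_entry eqxx.
case: eqP => // _ /eqP; rewrite oner_eq0 //.
Qed.

Lemma w0E n (i : 'I_n) : w0perm n i = rev_ord i.
Proof. by rewrite /w0perm permE. Qed.

Lemma w0inv n : (w0perm n)^-1%g = w0perm n.
Proof.
apply: (mulgI (w0perm n)); rewrite mulgV; apply/permP => i.
by rewrite permM !w0E rev_ordK perm1.
Qed.

Theorem mainTheorem12 (F : fieldType) (varpi : F) (n : nat)
  (Hvarpi : varpi != 0) (w : 'S_n) (Dw0w Dw Dw0 : 'M[F]_n) :
  let W0 := perm_mx (w0perm n) : 'M[F]_n in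
  let W := perm_mx w : 'M[F]_n in
  is_d varpi (W0 *m W) Dw0w ->
  is_d varpi W Dw ->
  is_d varpi W0 Dw0 ->
  exists z : F, z != 0 /\ Dw0w = W0 *m Dw *m W0 *m Dw0 *m z%:M.
Proof.
move=> W0 W [s1 [E1 [k1 [-> [_ H1]]]]] [s2 [E2 [k2 [-> [_ H2]]]]]
  [s3 [E3 [k3 [-> [_ H3]]]]].
rewrite /W0 /W -perm_mxM in E1.
move/perm_mx_injF: E1 => E1; move/perm_mx_injF: E2 => E2;
  move/perm_mx_injF: E3 => E3; subst s1 s2 s3.
rewrite /W0; clear W W0 Dw0w Dw Dw0.
case: n w k1 k2 k3 H1 H2 H3 => [|n'] w k1 k2 k3 H1 H2 H3.
  exists 1; split; first exact: oner_neq0.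
  by apply/matrixP => [[]].
set e := fun i : 'I_n'.+1 => k1 i - k2 (w0perm n'.+1 i) - k3 i.
have cons : forall i j : 'I_n'.+1, nat_of_ord j = i.+1 -> e i = e j.
  move=> i j Hij.
  have Hj := ltn_ord j.
  have Hw : nat_of_ord (w0perm n'.+1 i) = (w0perm n'.+1 j).+1.
    by rewrite !w0E /=; lia.
  have [P1 N1] := H1 i j Hij.
  have [P2 N2] := H2 _ _ Hw.
  have [_ N3] := H3 i j Hij.
  have N3' := N3 ltac:(rewrite /inv_root_neg !w0E /=; lia).
  move: N3'; rewrite /pair_root => N3'.
  rewrite /e.
  have hne : w (w0perm n'.+1 i) != w (w0perm n'.+1 j).
    rewrite (inj_eq (@perm_inj _ w)) (inj_eq (@perm_inj _ _)).
    apply/eqP => Heq; move: Hij; rewrite Heq; lia.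
  case: (ltngtP (w (w0perm n'.+1 i)) (w (w0perm n'.+1 j))) => h.
  - have a := P1 ltac:(by rewrite /inv_root_pos !permM).
    have b := N2 ltac:(by rewrite /inv_root_neg).
    move: a b; rewrite /pair_root; lia.
  - have a := N1 ltac:(by rewrite /inv_root_neg !permM).
    have b := P2 ltac:(by rewrite /inv_root_pos).
    move: a b; rewrite /pair_root; lia.
  - by move/eqP: hne => []; apply: val_inj.
have const : forall i : 'I_n'.+1, e i = e ord0.
  suff: forall m (H : (m < n'.+1)%N), e (Ordinal H) = e ord0.
    by move=> P i; case: i => m H; apply: P.
  elim=> [|m IH] H; first by congr e; apply: val_inj.
  have H' : (m < n'.+1)%N by lia.
  rewrite -(IH H'); symmetry; exact: cons.
exists (varpi ^ e ord0); split; first by rewrite expfz_eq0 negb_and Hvarpi orbT.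
rewrite mul_mx_scalar -row_permE.
have -> : forall A : 'M[F]_n'.+1, A *m perm_mx (w0perm n'.+1) = col_perm (w0perm n'.+1) A.
  by move=> A; rewrite col_permE w0inv.
rewrite /varpi_pow mul_mx_diag.
apply/matrixP => i j; rewrite !mxE.
rewrite (inj_eq (@perm_inj _ _)).
case: (eqVneq i j) => [<-|hij]; last by rewrite !mulr0n mul0r mulr0.
rewrite !mulr1n.
have Hc := const i.
have -> : k1 i = e ord0 + k2 (w0perm n'.+1 i) + k3 i.
  by rewrite -Hc /e; lia.
clearbody e.
rewrite expfzDr //. rewrite expfzDr //. by rewrite mulrA.
Qed.
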